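(* Let $d\ge1$ and let $P(k)$, $k\ge d+1$, be the asymptotic degree distribution of the $d$-dimensional P-RAN, given by $P(d+1)=\frac12$ and $P(k)=\frac{dk-d^2-d+1}{dk-d^2+d+2}P(k-1)$ for $k>d+1$. Then the P-RAN is scale free with degree exponent $\gamma=\frac{2d+1}{d}$, in the sense that $$\lim_{k\to\infty}\frac{\log P(k)-\log P(k-1)}{\log k-\log(k-1)}=-\frac{2d+1}{d},$$ so that $P(k)\sim k^{-\gamma}$ for large $k$.
   Context: P-RAN process in dimension $d$: start from a complete graph on $d+2$ vertices with the list of its $d+2$ $(d+1)$-cliques; at each step a clique is chosen uniformly at random from the list, a new vertex is joined to its $d+1$ vertices, the chosen clique stays in the list and the $d+1$ new $(d+1)$-cliques containing the new vertex are appended. $P(k)$ is the limit as $t\to\infty$ of the expected fraction of vertices having degree $k$. *)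

(* Defs.v *)
From Stdlib Require Import Reals.
From Coquelicot Require Import Coquelicot.
Open Scope R_scope.

Fixpoint PRAN_P_shift (d : nat) (j : nat) : R :=
  match j with
  | O => / 2
  | S j' =>
      let k := INR (d + 1 + S j') in
      let dr := INR d in
      (dr * k - dr ^ 2 - dr + 1) / (dr * k - dr ^ 2 + dr + 2)
        * PRAN_P_shift d j'
  end.

(* P(k) for k >= d+1 (value 0 outside the domain k >= d+1, never used
   in the asymptotic statement). *)
Definition PRAN_P (d k : nat) : R :=
  if (d + 1 <=? k)%nat then PRAN_P_shift d (k - (d + 1)) else 0.

(* Main.v *)
Require Import Defs.
From Stdlib Require Import Reals.
From Coquelicot Require Import Coquelicot.
Open Scope R_scope.
From Stdlib Require Import Reals Lra Lia Psatz ZArith.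

Lemma ln1p_bounds x : 0 < x -> x/(1+x) <= ln (1+x) <= x.
Proof.
  intros Hx. split.
  - assert (H := exp_ineq1_le (- (x/(1+x)))).
    assert (E : 1 + - (x/(1+x)) = /(1+x)) by (field; lra).
    rewrite E in H.
    apply ln_le in H; [|apply Rinv_0_lt_compat; lra].
    rewrite ln_exp, ln_Rinv in H by lra. lra.
  - assert (H := exp_ineq1_le x). apply ln_le in H; [|lra].
    rewrite ln_exp in H. lra.
Qed.

Lemma ratio_bounds A B u v : 0 < u -> 0 < v ->
  u/(1+u) <= A <= u -> v/(1+v) <= B <= v ->
  (u/(1+u))/v <= A/B <= u*(1+v)/v.
Proof.
  intros Hu Hv [HA1 HA2] [HB1 HB2].
  assert (HB : 0 < B). { apply Rlt_le_trans with (v/(1+v)); auto.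
    apply Rdiv_lt_0_compat; lra. }
  split.
  - apply Rle_trans with (A / v).
    + unfold Rdiv. apply Rmult_le_compat_r; auto. left; apply Rinv_0_lt_compat; lra.
    + unfold Rdiv. apply Rmult_le_compat_l.
      * apply Rle_trans with (u/(1+u)); auto. left; apply Rdiv_lt_0_compat; lra.
      * apply Rinv_le_contravar; lra.
  - apply Rle_trans with (u / B).
    + unfold Rdiv. apply Rmult_le_compat_r; auto. left; apply Rinv_0_lt_compat; lra.
    + assert (E : u*(1+v)/v = u / (v/(1+v))) by (field; lra). rewrite E.
      unfold Rdiv at 1 2. apply Rmult_le_compat_l; [lra|].
      apply Rinv_le_contravar; auto. apply Rdiv_lt_0_compat; lra.
Qed.

Lemma core (D x P : R) : 1 <= D -> D + 2 <= x -> 0 < P ->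
  (-(2*D+1)*x + 0)/(D*x + (-D^2-D+1)) <=
  (ln ((D*x - D^2 - D + 1)/(D*x - D^2 + D + 2) * P) - ln P)/(ln x - ln (x-1))
  <= (-(2*D+1)*x + (2*D+1))/(D*x + (-D^2+D+2)).
Proof.
  intros HD Hx HP.
  set (num := D*x - D^2 - D + 1). set (den := D*x - D^2 + D + 2).
  assert (Hnum : 0 < num) by (unfold num; nra).
  assert (Hden : 0 < den) by (unfold den; nra).
  set (u := (2*D+1)/num). set (v := /(x-1)).
  assert (Hu : 0 < u) by (unfold u; apply Rdiv_lt_0_compat; lra).
  assert (Hv : 0 < v) by (unfold v; apply Rinv_0_lt_compat; lra).
  assert (EA : ln (num/den * P) - ln P = - ln (1+u)).
  { rewrite ln_mult; [|apply Rdiv_lt_0_compat; lra|lra].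
    assert (E1 : 1 + u = den/num) by (unfold u, num, den in *; field; lra).
    rewrite E1.
    assert (E2 : ln (num/den) + ln (den/num) = 0).
    { rewrite <- ln_mult by (apply Rdiv_lt_0_compat; lra).
      replace (num/den*(den/num)) with 1 by (field; lra). apply ln_1. }
    lra. }
  assert (EB : ln x - ln (x-1) = ln (1+v)).
  { replace x with ((x-1)*(1+v)) at 1 by (unfold v; field; lra).
    rewrite ln_mult; [ring|lra|lra]. }
  rewrite EA, EB.
  destruct (ratio_bounds (ln (1+u)) (ln (1+v)) u v Hu Hv
              (ln1p_bounds u Hu) (ln1p_bounds v Hv)) as [L U].
  assert (EL : (u/(1+u))/v = (2*D+1)*(x-1)/den)
    by (unfold u, v, num, den in *; field; repeat split; lra).
  assert (EU : u*(1+v)/v = (2*D+1)*x/num)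
    by (unfold u, v, num, den in *; field; repeat split; lra).
  rewrite EL in L. rewrite EU in U.
  replace (- ln (1+u) / ln (1+v)) with (- (ln (1+u) / ln (1+v)))
    by (unfold Rdiv; ring).
  replace ((-(2*D+1)*x + 0)/(D*x + (-D^2-D+1))) with (-((2*D+1)*x/num))
    by (unfold num in *; field; lra).
  replace ((-(2*D+1)*x + (2*D+1))/(D*x + (-D^2+D+2))) with (-((2*D+1)*(x-1)/den))
    by (unfold den in *; field; lra).
  lra.
Qed.

Lemma rat_lim (a b c e : R) : 0 < c ->
  is_lim_seq (fun k => (a * INR k + b)/(c * INR k + e)) (a / c).
Proof.
  intros Hc.
  assert (Hi : is_lim_seq (fun k => / INR k) 0).
  { replace (Finite 0) with (Rbar_inv p_infty) by reflexivity.
    apply is_lim_seq_inv; [apply is_lim_seq_INR|discriminate]. }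
  apply is_lim_seq_ext_loc with (fun k => (a + b * / INR k)/(c + e * / INR k)).
  - destruct (Rlt_dec 0 (Rabs e)) as [He|He].
    2:{ exists 1%nat. intros n Hn. assert (e = 0) by (pose proof (Rabs_pos e); apply Rabs_eq_0; lra).
        subst e. assert (0 < INR n) by (apply lt_0_INR; lia). field; lra. }
    exists (S (Z.to_nat (up (Rabs e / c)))). intros n Hn.
    assert (Hn' : INR (S (Z.to_nat (up (Rabs e / c)))) <= INR n) by (apply le_INR; lia).
    rewrite S_INR in Hn'.
    assert (Hup : Rabs e / c < INR (Z.to_nat (up (Rabs e / c)))).
    { rewrite INR_IZR_INZ, Z2Nat.id.
      - apply archimed.
      - apply le_IZR. pose proof (archimed (Rabs e / c)) as [H1 _].
        assert (0 <= Rabs e / c) by (apply Rdiv_le_0_compat; [apply Rabs_pos|lra]). lra. }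
    assert (Hpos : Rabs e < c * INR n).
    { assert (Rabs e / c * c < INR n * c) by (apply Rmult_lt_compat_r; lra).
      replace (Rabs e / c * c) with (Rabs e) in H by (field; lra). lra. }
    assert (0 < INR n) by (apply Rle_lt_trans with (Rabs e / c); [apply Rdiv_le_0_compat; [apply Rabs_pos|lra]|lra]).
    assert (c * INR n + e <> 0).
    { destruct (Rle_dec 0 e); [rewrite Rabs_right in Hpos by lra|rewrite Rabs_left in Hpos by lra]; nra. }
    field; split; lra.
  - apply is_lim_seq_div'.
    + assert (H : is_lim_seq (fun k => a + b * / INR k) (a + b * 0)).
      { apply is_lim_seq_plus'; [apply is_lim_seq_const|apply is_lim_seq_mult'; [apply is_lim_seq_const|exact Hi]]. }
      rewrite Rmult_0_r, Rplus_0_r in H. exact H.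
    + assert (H : is_lim_seq (fun k => c + e * / INR k) (c + e * 0)).
      { apply is_lim_seq_plus'; [apply is_lim_seq_const|apply is_lim_seq_mult'; [apply is_lim_seq_const|exact Hi]]. }
      rewrite Rmult_0_r, Rplus_0_r in H. exact H.
    + lra.
Qed.

Lemma shift_pos d : (1 <= d)%nat -> forall j, 0 < PRAN_P_shift d j.
Proof.
  intros hd j. induction j as [|j IH]; simpl PRAN_P_shift; [lra|].
  set (x := INR (d + 1 + S j)). set (D := INR d).
  assert (HD : 1 <= D) by (unfold D; apply (le_INR 1); lia).
  assert (Hx : D + 2 <= x).
  { unfold x, D. replace (d + 1 + S j)%nat with (d + 2 + j)%nat by lia.
    rewrite !plus_INR. simpl (INR 2). pose proof (pos_INR j). lra. }
  apply Rmult_lt_0_compat; auto. apply Rdiv_lt_0_compat; nra.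
Qed.

Theorem mainTheorem4 (d : nat) (hd : (1 <= d)%nat) :
  is_lim_seq
    (fun k : nat =>
       (ln (PRAN_P d k) - ln (PRAN_P d (k - 1))) / (ln (INR k) - ln (INR (k - 1))))
    (Finite (- (2 * INR d + 1) / INR d)).
Proof.
  set (D := INR d).
  assert (HD : 1 <= D) by (unfold D; apply (le_INR 1); lia).
  apply is_lim_seq_le_le_loc with
    (u := fun k => (-(2*D+1)*INR k + 0)/(D*INR k + (-D^2-D+1)))
    (w := fun k => (-(2*D+1)*INR k + (2*D+1))/(D*INR k + (-D^2+D+2))).
  - exists (d + 2)%nat. intros n Hn.
    replace n with (d + 2 + (n - (d+2)))%nat by lia.
    set (m := (n - (d+2))%nat).
    unfold PRAN_P.
    rewrite (proj2 (Nat.leb_le (d+1) (d+2+m))) by lia.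
    rewrite (proj2 (Nat.leb_le (d+1) (d+2+m-1))) by lia.
    replace (d + 2 + m - (d + 1))%nat with (S m) by lia.
    replace (d + 2 + m - 1 - (d + 1))%nat with m by lia.
    replace (INR (d + 2 + m - 1)) with (INR (d + 2 + m) - 1).
    2:{ replace (d + 2 + m - 1)%nat with (d + 1 + m)%nat by lia.
        replace (d + 2 + m)%nat with (S (d + 1 + m)) by lia.
        rewrite S_INR. ring. }
    simpl PRAN_P_shift.
    replace (INR (d + 1 + S m)) with (INR (d + 2 + m)) by (f_equal; lia).
    fold D.
    apply core; auto.
    + rewrite !plus_INR. simpl (INR 2). fold D. pose proof (pos_INR m). lra.
    + apply shift_pos; auto.
  - replace (- (2 * D + 1) / D) with (-(2*D+1)/D) by reflexivity.
    apply rat_lim; lra.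
  - apply rat_lim; lra.
Qed.
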